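(* For every formula $\varphi$ of $\mathcal L^{\bigcirc}_\square$: $\varphi$ is derivable in $\mathbf{GLC}$ if and only if $\varphi$ is valid on every finite dynamic $\mathbf{GL}$ frame.
   Context: Fix a non-empty set $\mathsf{PV}$ of propositional variables. The language $\mathcal L^{\bigcirc}_\square$ is given by $\varphi::= p\mid \varphi\wedge\varphi\mid\neg\varphi\mid\square\varphi\mid\bigcirc\varphi$ with $p\in\mathsf{PV}$. Axioms and rules: Taut; K: $\square(\varphi\to\psi)\to(\square\varphi\to\square\psi)$; 4: $\square\varphi\to\square\square\varphi$; L: $\square(\square\varphi\to\varphi)\to\square\varphi$; ${\rm Next}_\neg$: $\neg\bigcirc\varphi\leftrightarrow\bigcirc\neg\varphi$; ${\rm Next}_\wedge$: $\bigcirc(\varphi\wedge\psi)\leftrightarrow\bigcirc\varphi\wedge\bigcirc\psi$; C: $\bigcirc\varphi\wedge\bigcirc\square\varphi\to\square\bigcirc\varphi$; rules modus ponens, ${\rm Nec}_\square$, ${\rm Nec}_\bigcirc$. $\mathbf{GLC}$ is axiomatised by Taut, K, 4, L, ${\rm Next}_\neg$, ${\rm Next}_\wedge$, C and closed under these rules. A dynamic Kripke frame is $\langle W,\sqsubset,f\rangle$ with $W$ non-empty, $\sqsubset$ a binary relation on $W$ and $f\colon W\to W$ weakly monotone: $w\sqsubset v$ implies $f(w)=f(v)$ or $f(w)\sqsubset f(v)$. It is a dynamic $\mathbf{GL}$ frame if $\sqsubset$ is transitive and converse well-founded (for finite $W$: transitive and irreflexive). Truth under a valuation: $w\models\square\varphi$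 iff $v\models\varphi$ for all $v$ with $w\sqsubset v$; $w\models\bigcirc\varphi$ iff $f(w)\models\varphi$; other clauses standard. Valid on a frame means true at all points under all valuations. *)

(* Defs.v *)
From mathcomp Require Import all_boot.
Set Implicit Arguments.
Unset Strict Implicit.
Unset Printing Implicit Defensive.

Inductive form (PV : Type) : Type :=
| Var : PV -> form PV
| And : form PV -> form PV -> form PV
| Not : form PV -> form PV
| Box : form PV -> form PV
| Next : form PV -> form PV.

Arguments Var {PV} _.
Arguments And {PV} _ _.
Arguments Not {PV} _.
Arguments Box {PV} _.
Arguments Next {PV} _.

Definition Or {PV} (a b : form PV) := Not (And (Not a) (Not b)).
Definition Imp {PV} (a b : form PV) := Not (And a (Not b)).
Definition Iff {PV} (a b : form PV) := And (Imp a b) (Imp b a).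

Fixpoint peval {PV} (v : form PV -> bool) (phi : form PV) : bool :=
  match phi with
  | And a b => peval v a && peval v b
  | Not a => ~~ peval v a
  | _ => v phi
  end.

(** Taut: all substitution instances of propositional tautologies, i.e.
    formulas true under every boolean assignment to their maximal
    non-boolean (Var / Box / Next) subformulas. *)
Definition tautology {PV} (phi : form PV) : Prop :=
  forall v : form PV -> bool, peval v phi = true.

Inductive GLC {PV : Type} : form PV -> Prop :=
| ax_taut phi : tautology phi -> GLC phi
| ax_K phi psi : GLC (Imp (Box (Imp phi psi)) (Imp (Box phi) (Box psi)))
| ax_4 phi : GLC (Imp (Box phi) (Box (Box phi)))
| ax_L phi : GLC (Imp (Box (Imp (Box phi) phi)) (Box phi))
| ax_Next_not phi : GLC (Iff (Not (Next phi)) (Next (Not phi)))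
| ax_Next_and phi psi : GLC (Iff (Next (And phi psi)) (And (Next phi) (Next psi)))
| ax_C phi : GLC (Imp (And (Next phi) (Next (Box phi))) (Box (Next phi)))
| rule_MP phi psi : GLC (Imp phi psi) -> GLC phi -> GLC psi
| rule_Nec_box phi : GLC phi -> GLC (Box phi)
| rule_Nec_next phi : GLC phi -> GLC (Next phi).

Record finDynFrame := FinDynFrame {
  dW : finType;
  dpt : dW;                      (* W is non-empty *)
  dR : dW -> dW -> Prop;
  df : dW -> dW;
  df_weak_mono : forall w v, dR w v -> df w = df v \/ dR (df w) (df v)
}.

Definition is_dynGL (F : finDynFrame) : Prop :=
  (forall x y z : dW F, dR x y -> dR y z -> dR x z) /\ (forall x : dW F, ~ dR x x).

Fixpoint sat {PV} (F : finDynFrame) (V : PV -> dW F -> Prop)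
    (w : dW F) (phi : form PV) : Prop :=
  match phi with
  | Var p => V p w
  | And a b => sat V w a /\ sat V w b
  | Not a => ~ sat V w a
  | Box a => forall u : dW F, dR w u -> sat V u a
  | Next a => sat V (df w) a
  end.

Definition valid_on {PV} (F : finDynFrame) (phi : form PV) : Prop :=
  forall (V : PV -> dW F -> Prop) (w : dW F), sat V w phi.

(* Main.v *)
Require Import Defs.
From mathcomp Require Import all_boot zify.
From Stdlib Require Import Classical ClassicalEpsilon.
From Stdlib Require List.
Set Implicit Arguments.
Unset Strict Implicit.
Unset Printing Implicit Defensive.


Lemma hasIn T (p : pred T) s : has p s -> exists2 x, List.In x s & p x.
Proof.
elim: s => //= x s IH /orP[px|/IH[y Hy py]]; first by exists x => //; left.
by exists y => //; right.
Qed.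
Lemma hasIn2 T (p : pred T) s x : List.In x s -> p x -> has p s.
Proof. elim: s => //= y s IH [->->//|/IH H /H ->]; by rewrite orbT. Qed.
Lemma allIn T (p : pred T) s : all p s -> forall x, List.In x s -> p x.
Proof. elim: s => //= y s IH /andP[py /IH H] x [<-//|/H//]. Qed.
Lemma allIn2 T (p : pred T) s : (forall x, List.In x s -> p x) -> all p s.
Proof. elim: s => //= y s IH H; rewrite H ?IH //; [by move=> x Hx; apply: H; right | by left]. Qed.
Lemma In_map T U (f : T -> U) s y : List.In y (map f s) -> exists2 x, List.In x s & y = f x.
Proof.
elim: s => //= x s IH [<-|/IH[z Hz ->]]; first by exists x => //; left.
by exists z => //; right.
Qed.
Lemma In_map2 T U (f : T -> U) s x : List.In x s -> List.In (f x) (map f s).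
Proof. elim: s => //= y s IH [->|/IH]; [by left | by right]. Qed.

Section Prop1.
Variable PV : Type.
Variable p0 : PV.
Implicit Types a b c : form PV.

Definition top : form PV := Imp (Var p0) (Var p0).
Definition bot : form PV := Not top.
Arguments top : simpl never.
Arguments bot : simpl never.
Definition bigAnd (l : seq (form PV)) := foldr And top l.
Definition bigOr (l : seq (form PV)) := foldr Or bot l.

Lemma pe_imp v a b : peval v (Imp a b) = (peval v a ==> peval v b).
Proof. by rewrite /= ; case: (peval v a); case: (peval v b). Qed.
Lemma pe_or v a b : peval v (Or a b) = (peval v a || peval v b).
Proof. by rewrite /= ; case: (peval v a); case: (peval v b). Qed.
Lemma pe_iff v a b : peval v (Iff a b) = (peval v a == peval v b).
Proof. by rewrite /= ; case: (peval v a); case: (peval v b). Qed.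
Lemma pe_top v : peval v top. Proof. by rewrite pe_imp implybb. Qed.
Lemma pe_bot v : peval v bot = false. Proof. by rewrite /bot /top /=; case: (v _). Qed.
Lemma pe_bigAnd v l : peval v (bigAnd l) = all (peval v) l.
Proof. elim: l => [|x l IH]; first exact: pe_top. by rewrite /= IH. Qed.
Lemma pe_bigOr v l : peval v (bigOr l) = has (peval v) l.
Proof. elim: l => [|x l IH]; first exact: pe_bot. by rewrite /= -IH -pe_or. Qed.

Definition pe := (pe_imp, pe_or, pe_iff, pe_top, pe_bot, pe_bigAnd, pe_bigOr).

Lemma prop_derive (hs : seq (form PV)) b :
  (forall v, all (peval v) hs -> peval v b) ->
  (forall h, List.In h hs -> GLC h) -> GLC b.
Proof.
move=> Hv Hh.
have T : GLC (foldr Imp b hs).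
  apply: ax_taut => v; move: (Hv v); elim: hs {Hv Hh} => [|h hs IH] /=.
    by apply.
  move=> H; apply/negP; case/andP=> ph /negP; apply; apply: IH => Ha; apply: H; by rewrite ph Ha.
move: Hh T; clear Hv; elim: hs => [|h hs IH] Hh T //=.
apply: IH; first by move=> h' Hin; apply: Hh; right.
exact: rule_MP T (Hh h (or_introl erefl)).
Qed.

Ltac pcase := repeat match goal with |- context [?f ?x] =>
  lazymatch type of f with (form _ -> bool) => case: (f x) end
  | |- context [all ?p ?l] => case: (all p l)
  | |- context [has ?p ?l] => case: (has p l) end.

Ltac pfin := rewrite /=; rewrite ?pe_bigAnd ?pe_bigOr; pcase; cbn; intros; unfold is_true in *; congruence.

Lemma taut0 b : (forall v, peval v b) -> GLC b.
Proof. move=> H; exact: ax_taut. Qed.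
Lemma taut1 h b : (forall v, peval v h -> peval v b) -> GLC h -> GLC b.
Proof.
move=> H Hh; apply: (@prop_derive [:: h]) => [v|h']; first by rewrite /= andbT; apply: H.
by case=> // <-.
Qed.
Lemma taut2 h1 h2 b : (forall v, peval v h1 -> peval v h2 -> peval v b) ->
  GLC h1 -> GLC h2 -> GLC b.
Proof.
move=> H H1 H2; apply: (@prop_derive [:: h1; h2]) => [v|h'].
  by rewrite /= andbT => /andP[]; apply: H.
by case=> [<-|[<-|]].
Qed.
Lemma taut3 h1 h2 h3 b : (forall v, peval v h1 -> peval v h2 -> peval v h3 -> peval v b) ->
  GLC h1 -> GLC h2 -> GLC h3 -> GLC b.
Proof.
move=> H H1 H2 H3; apply: (@prop_derive [:: h1; h2; h3]) => [v|h'].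
  by rewrite /= andbT => /andP[? /andP[]]; apply: H.
by case=> [<-|[<-|[<-|]]].
Qed.
Lemma taut4 h1 h2 h3 h4 b : (forall v, peval v h1 -> peval v h2 -> peval v h3 -> peval v h4 -> peval v b) ->
  GLC h1 -> GLC h2 -> GLC h3 -> GLC h4 -> GLC b.
Proof.
move=> H H1 H2 H3 H4; apply: (@prop_derive [:: h1; h2; h3; h4]) => [v|h'].
  by rewrite /= andbT => /andP[? /andP[? /andP[]]]; apply: H.
by case=> [<-|[<-|[<-|[<-|]]]].
Qed.
Lemma taut5 h1 h2 h3 h4 h5 b : (forall v, peval v h1 -> peval v h2 -> peval v h3 -> peval v h4 -> peval v h5 -> peval v b) ->
  GLC h1 -> GLC h2 -> GLC h3 -> GLC h4 -> GLC h5 -> GLC b.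
Proof.
move=> H H1 H2 H3 H4 H5; apply: (@prop_derive [:: h1; h2; h3; h4; h5]) => [v|h'].
  by rewrite /= andbT => /andP[? /andP[? /andP[? /andP[]]]]; apply: H.
by case=> [<-|[<-|[<-|[<-|[<-|]]]]].
Qed.

Lemma gtop : GLC top. Proof. by apply: taut0 => v; rewrite pe_top. Qed.

Lemma box_mono a b : GLC (Imp a b) -> GLC (Imp (Box a) (Box b)).
Proof. move=> H; exact: rule_MP (ax_K a b) (rule_Nec_box H). Qed.

Lemma box_and a b : GLC (Imp (And (Box a) (Box b)) (Box (And a b))).
Proof.
have H1 : GLC (Imp (Box a) (Box (Imp b (And a b)))).
  by apply: box_mono; apply: taut0 => v; rewrite !pe /=; pfin.
apply: taut2 H1 (ax_K b (And a b)) => v; rewrite !pe /=.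
pfin.
Qed.

Lemma box_bigAnd l : GLC (Imp (bigAnd (map Box l)) (Box (bigAnd l))).
Proof.
elim: l => [|x l IH] /=.
  by apply: taut1 (rule_Nec_box gtop) => v; rewrite !pe => ->.
apply: taut2 IH (box_and x (bigAnd l)) => v; rewrite !pe /=.
pfin.
Qed.

Lemma dia_lemma (A C : form PV) : GLC (Imp (And (Box A) (Not (Box (Not C)))) (Not (Box (Not (And C A))))).
Proof.
have H1 : GLC (Imp (Box A) (Box (Imp (Not (And C A)) (Not C)))).
  by apply: box_mono; apply: taut0 => v; rewrite !pe /=; pfin.
apply: taut2 H1 (ax_K (Not (And C A)) (Not C)) => v; rewrite !pe /=.
pfin.
Qed.

Lemma next_not1 a : GLC (Imp (Next (Not a)) (Not (Next a))).
Proof.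
apply: taut1 (ax_Next_not a) => v; rewrite !pe /=.
pfin.
Qed.
Lemma next_not2 a : GLC (Imp (Not (Next a)) (Next (Not a))).
Proof.
apply: taut1 (ax_Next_not a) => v; rewrite !pe /=.
pfin.
Qed.
Lemma next_and1 a b : GLC (Imp (Next (And a b)) (And (Next a) (Next b))).
Proof.
apply: taut1 (ax_Next_and a b) => v; rewrite !pe /=.
pfin.
Qed.
Lemma next_and2 a b : GLC (Imp (And (Next a) (Next b)) (Next (And a b))).
Proof.
apply: taut1 (ax_Next_and a b) => v; rewrite !pe /=.
pfin.
Qed.

Lemma next_mono a b : GLC (Imp a b) -> GLC (Imp (Next a) (Next b)).
Proof.
move=> H; have H1 := rule_Nec_next H.
apply: taut4 H1 (next_not1 (And a (Not b))) (next_and2 a (Not b)) (next_not2 b) => v; rewrite !pe /=.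
pfin.
Qed.

Lemma next_top : GLC (Next top). Proof. exact: rule_Nec_next gtop. Qed.

Lemma next_bigOr l : GLC (Imp (Next (bigOr l)) (bigOr (map Next l))).
Proof.
elim: l => [|x l IH] /=.
  apply: taut2 (next_not1 top) next_top => v; rewrite !pe.
  rewrite /= ; pfin.
rewrite /Or.
apply: taut5 IH (next_not1 (And (Not x) (Not (bigOr l)))) (next_and2 (Not x) (Not (bigOr l)))
   (next_not2 x) (next_not2 (bigOr l)) => v; rewrite !pe /=.
pfin.
Qed.

Lemma C_rule a b : GLC (Imp a b) -> GLC (Imp a (Box b)) -> GLC (Imp (Next a) (Box (Next b))).
Proof.
move=> H1 H2; have := next_mono H1; have := next_mono H2 => G2 G1.
apply: taut3 G1 G2 (ax_C b) => v; rewrite !pe /=.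
pfin.
Qed.

Lemma lob a : GLC (Imp (Not (Box a)) (Not (Box (Not (And (Box a) (Not a)))))).
Proof.
apply: taut1 (ax_L a) => v; rewrite !pe /=.
pfin.
Qed.

Definition Cons a := ~ GLC (Not a).

Lemma cons_weak a b : GLC (Imp a b) -> Cons a -> Cons b.
Proof.
move=> H Ca Nb; apply: Ca; apply: taut2 H Nb => v; rewrite !pe /=.
pfin.
Qed.

Lemma cons_or a l : Cons a -> GLC (Imp a (bigOr l)) -> exists2 b, List.In b l & Cons (And a b).
Proof.
move=> Ca H; apply: NNPP => Hn; apply: Ca.
have Hall : forall b, List.In b l -> GLC (Not (And a b)).
  by move=> b Hb; apply: NNPP => Hc; apply: Hn; exists b.
apply: (@prop_derive (Imp a (bigOr l) :: map (fun b => Not (And a b)) l)).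
  move=> v /andP[]; rewrite pe_imp pe_bigOr => Hi Hl; apply/negP => pa.
  move/implyP: Hi => /(_ pa) /hasIn[b Hb pb].
  have : peval v (Not (And a b)) by apply: (allIn Hl); apply: (In_map2 (fun b => Not (And a b))).
  by move=> /= /negP; apply; apply/andP.
move=> h /= [<-|]; first by [].
elim: l Hall {H Hn} => [|x l IH] Hall //= [<-|Hin]; first by apply: Hall; left.
by apply: IH => // b Hb; apply: Hall; right.
Qed.

Lemma cons_dia a b : Cons a -> GLC (Imp a (Not (Box (Not b)))) -> Cons b.
Proof.
move=> Ca H Nb; apply: Ca; apply: taut2 H (rule_Nec_box Nb) => v; rewrite !pe /=.
pfin.
Qed.

Lemma cons_next a : Cons (Next a) -> Cons a.
Proof.
move=> Ca Na; apply: Ca; apply: taut2 (next_not1 a) (rule_Nec_next Na) => v; rewrite !pe /=.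
pfin.
Qed.

End Prop1.

Ltac pcase := repeat match goal with |- context [?f ?x] =>
  lazymatch type of f with (form _ -> bool) => case: (f x) end
  | |- context [all ?p ?l] => case: (all p l)
  | |- context [has ?p ?l] => case: (has p l) end.

Ltac pfin := rewrite /=; rewrite ?pe_bigAnd ?pe_bigOr; pcase; cbn; intros; unfold is_true in *; congruence.




Definition db (P : Prop) : bool := if excluded_middle_informative P then true else false.
Lemma dbP (P : Prop) : db P <-> P.
Proof. by rewrite /db; case: excluded_middle_informative. Qed.

Lemma conv_ind (F : finDynFrame) : is_dynGL F ->
  forall P : dW F -> Prop, (forall x, (forall y, dR x y -> P y) -> P x) -> forall x, P x.
Proof.
move=> [Htr Hirr] P H.
pose succ (x : dW F) := [set y | db (dR x y)].
suff: forall n x, #|succ x| <= n -> P x by move=> S x; apply: (S _ x (leqnn _)).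
elim=> [|n IH] x Hx; apply: H => y Hxy.
- have : y \in succ x by rewrite inE; apply/dbP.
  by move: Hx; rewrite leqn0 => /eqP/cards0_eq ->; rewrite inE.
- apply: IH; rewrite -ltnS; apply: leq_trans Hx; apply: proper_card.
  rewrite properE; apply/andP; split.
    by apply/subsetP => z; rewrite !inE => /dbP Hyz; apply/dbP; apply: Htr Hxy Hyz.
  apply/subsetPn; exists y; rewrite !inE; first by apply/dbP.
  by apply/negP => /dbP /Hirr.
Qed.

Section Sound.
Variable PV : Type.
Implicit Types a b : form PV.

Lemma sat_imp F V w a b : @sat PV F V w (Imp a b) <-> (sat V w a -> sat V w b).
Proof. by rewrite /=; split => H; [move=> Ha; apply: NNPP => Hb; apply: H | case=> /H]. Qed.

Lemma peval_sat F V w a : peval (fun c => db (@sat PV F V w c)) a <-> sat V w a.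
Proof.
elim: a => [p|a IHa b IHb|a IHa|a IHa|a IHa] /=; try exact: dbP.
- by split => [/andP[/IHa ? /IHb ?]//|[/IHa -> /IHb ->]].
- by split => [/negP H /IHa|H]; [|apply/negP => /IHa].
Qed.

Theorem soundness a : GLC a -> forall F, is_dynGL F -> valid_on F a.
Proof.
move=> H F HF; have [Htr Hirr] := HF.
elim: H => {a} [a Ht|a b|a|a|a|a b|a|a b _ IH1 _ IH2|a _ IH|a _ IH] V w.
- by apply/peval_sat; apply: Ht.
- apply/sat_imp => H1; apply/sat_imp => H2 u Hu.
  by move/(_ u Hu)/sat_imp: H1; apply; apply: H2.
- apply/sat_imp => H1 u Hu z Hz; apply: H1; exact: Htr Hu Hz.
- apply/sat_imp => H1.
  suff S : forall y, (dR w y -> sat V y a) by [].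
  apply: (conv_ind HF (P := fun y => dR w y -> sat V y a)) => y IH Hy.
  apply: (proj1 (sat_imp V y (Box a) a) (H1 y Hy)); rewrite /= => z Hz.
  by apply: (IH z Hz); exact: Htr Hy Hz.
- rewrite /=; tauto.
- rewrite /=; tauto.
- apply/sat_imp => -[H1 H2] u Hu /=.
  by case: (df_weak_mono Hu) => [<-//|]; apply: H2.
- by move/sat_imp: (IH1 V w); apply.
- by move=> u _; apply: IH.
- by apply: IH.
Qed.
End Sound.


Fixpoint sub {PV} (a : form PV) : seq (form PV) :=
  a :: match a with
       | And b c => sub b ++ sub c
       | Not b | Box b | Next b => sub b
       | Var _ => [::] end.

Fixpoint ohgt {PV} (a : form PV) : nat :=
  match a with
  | Var _ => 0
  | And b c => maxn (ohgt b) (ohgt c)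
  | Not b | Box b => ohgt b
  | Next b => (ohgt b).+1 end.

Lemma In_app T (x : T) s t : List.In x (s ++ t) <-> List.In x s \/ List.In x t.
Proof. elim: s => [|y s IH] /=; [tauto | rewrite IH; tauto]. Qed.

Lemma sub_trans PV (a b c : form PV) : List.In b (sub a) -> List.In c (sub b) -> List.In c (sub a).
Proof.
elim: a => [p|a1 IH1 a2 IH2|a1 IH1|a1 IH1|a1 IH1] /= [<-//|H] Hc; right;
  rewrite ?In_app; first by case: H.
- by case/In_app: H => H; [left; apply: IH1 | right; apply: IH2].
- exact: IH1.
- exact: IH1.
- exact: IH1.
Qed.

Lemma sub_self PV (a : form PV) : List.In a (sub a).
Proof. by case: a => *; left. Qed.

Lemma In_nthP T (d : T) s x : List.In x s -> exists2 i, i < size s & nth d s i = x.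
Proof.
elim: s => //= y s IH [<-|/IH[i Hi <-]]; first by exists 0.
by exists i.+1.
Qed.
Lemma nth_In T (d : T) s i : i < size s -> List.In (nth d s i) s.
Proof. elim: s i => //= y s IH [|i] /= Hi; [by left | right; exact: IH]. Qed.

Lemma inIn (T : eqType) (x : T) s : x \in s -> List.In x s.
Proof. elim: s => //= y s IH; rewrite inE => /orP[/eqP->|/IH H]; [by left | by right]. Qed.
Lemma Inin (T : eqType) (x : T) s : List.In x s -> x \in s.
Proof. elim: s => //= y s IH [->|/IH H]; rewrite inE; first by rewrite eqxx. by rewrite H orbT. Qed.

Section Comp.
Variable PV : Type.
Variable p0 : PV.
Variable phi : form PV.
Implicit Types a b : form PV.

Notation tp := (top p0).
Notation bO := (bigOr p0).
Notation bA := (bigAnd p0).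

Definition S := sub phi.
Definition m := size S.
Definition sf (i : 'I_m) : form PV := nth tp S i.

Definition inS a := exists i : 'I_m, sf i = a.

Lemma In_inS a : List.In a S -> inS a.
Proof. move/(In_nthP tp) => [i Hi <-]; by exists (Ordinal Hi). Qed.
Lemma sf_In i : List.In (sf i) S.
Proof. exact: nth_In. Qed.

Lemma sfS i a : sf i = a -> forall b, List.In b (sub a) -> inS b.
Proof. move=> Hi b Hb; apply: In_inS; apply: sub_trans (sf_In i) _; by rewrite Hi. Qed.

Lemma sf_and i a b : sf i = And a b -> inS a /\ inS b.
Proof. move=> H; split; apply: (sfS H) => /=; right; apply/In_app; [left|right]; exact: sub_self. Qed.
Lemma sf_not i a : sf i = Not a -> inS a.
Proof. move=> H; apply: (sfS H) => /=; right; exact: sub_self. Qed.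
Lemma sf_box i a : sf i = Box a -> inS a.
Proof. move=> H; apply: (sfS H) => /=; right; exact: sub_self. Qed.
Lemma sf_next i a : sf i = Next a -> inS a.
Proof. move=> H; apply: (sfS H) => /=; right; exact: sub_self. Qed.

Definition sv := (m.-tuple bool)%type.
Definition lit (t : sv) (i : 'I_m) := if tnth t i then sf i else Not (sf i).
Definition atomF (t : sv) := bA (map (lit t) (enum 'I_m)).

Lemma atom_lit t i : GLC (Imp (atomF t) (lit t i)).
Proof.
apply: taut0 => v; rewrite pe_imp pe_bigAnd; apply/implyP => H; apply: (allIn H).
by apply: In_map2; apply: inIn; rewrite mem_enum.
Qed.

Definition allsv : seq sv := enum {: sv}.

Lemma all_atoms : GLC (bO (map atomF allsv)).
Proof.
apply: taut0 => v; rewrite pe_bigOr.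
pose t : sv := [tuple peval v (sf i) | i < m].
apply: (@hasIn2 (form PV) (peval v) (map atomF allsv) (atomF t)); first by apply: In_map2; apply: inIn; rewrite mem_enum.
rewrite pe_bigAnd; apply: allIn2 => f Hf; have [i _ ->] := In_map Hf; rewrite /lit tnth_mktuple.
by case E: (peval v (sf i)) => //=; rewrite E.
Qed.

Lemma cons_true G t j : Cons G -> GLC (Imp G (atomF t)) -> GLC (Imp G (sf j)) -> tnth t j.
Proof.
move=> C H1 H2; case E: (tnth t j) => //; exfalso; apply: C.
have := atom_lit t j; rewrite /lit E => H3.
apply: taut3 H1 H2 H3 => v; rewrite !pe /=; pfin.
Qed.

Lemma cons_false G t j : Cons G -> GLC (Imp G (atomF t)) -> GLC (Imp G (Not (sf j))) -> tnth t j = false.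
Proof.
move=> C H1 H2; case E: (tnth t j) => //; exfalso; apply: C.
have := atom_lit t j; rewrite /lit E => H3.
apply: taut3 H1 H2 H3 => v; rewrite !pe /=; pfin.
Qed.

Definition AC t := Cons (atomF t).

Lemma imp_refl a : GLC (Imp a a).
Proof. apply: taut0 => v; rewrite !pe; pfin. Qed.

Lemma ac_eq t i j : AC t -> sf i = sf j -> tnth t i = tnth t j.
Proof.
move=> C E; case Ej: (tnth t j).
- apply: (cons_true C (imp_refl _)); rewrite E.
  by have := atom_lit t j; rewrite /lit Ej.
- apply: (cons_false C (imp_refl _)); rewrite E.
  by have := atom_lit t j; rewrite /lit Ej.
Qed.

Lemma ac_not t i j : AC t -> sf i = Not (sf j) -> tnth t i = ~~ tnth t j.
Proof.
move=> C E; case Ej: (tnth t j) => /=.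
- apply: (cons_false C (imp_refl _)); rewrite E.
  have := atom_lit t j; rewrite /lit Ej => H; apply: taut1 H => v; rewrite !pe; pfin.
- apply: (cons_true C (imp_refl _)); rewrite E.
  by have := atom_lit t j; rewrite /lit Ej.
Qed.

Lemma ac_and t i j k : AC t -> sf i = And (sf j) (sf k) -> tnth t i = tnth t j && tnth t k.
Proof.
move=> C E; case Ej: (tnth t j); case Ek: (tnth t k) => /=.
- apply: (cons_true C (imp_refl _)); rewrite E.
  have := atom_lit t j; have := atom_lit t k; rewrite /lit Ej Ek => H1 H2.
  apply: taut2 H1 H2 => v; rewrite !pe /=; pfin.
- apply: (cons_false C (imp_refl _)); rewrite E.
  have := atom_lit t k; rewrite /lit Ek => H1; apply: taut1 H1 => v; rewrite !pe /=; pfin.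
- apply: (cons_false C (imp_refl _)); rewrite E.
  have := atom_lit t j; rewrite /lit Ej => H1; apply: taut1 H1 => v; rewrite !pe /=; pfin.
- apply: (cons_false C (imp_refl _)); rewrite E.
  have := atom_lit t j; rewrite /lit Ej => H1; apply: taut1 H1 => v; rewrite !pe /=; pfin.
Qed.

Lemma compat t u j j1 Z : sf j = Next (sf j1) ->
  Cons (And (atomF t) (Next (And (atomF u) Z))) -> tnth t j = tnth u j1.
Proof.
move=> E C.
have A1 : GLC (Imp (And (atomF t) (Next (And (atomF u) Z))) (atomF t)).
  by apply: taut0 => v; rewrite !pe /=; pfin.
have A2 : GLC (Imp (And (atomF t) (Next (And (atomF u) Z))) (Next (lit u j1))).
  have H := next_mono (atom_lit u j1).
  have H0 : GLC (Imp (Next (And (atomF u) Z)) (Next (atomF u))).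
    by apply: next_mono; apply: taut0 => v; rewrite !pe /=; pfin.
  apply: taut2 H H0 => v; rewrite !pe /=; pfin.
case Eu: (tnth u j1).
- apply: (cons_true C A1); rewrite E; move: A2; rewrite /lit Eu //.
- apply: (cons_false C A1); rewrite E; move: A2; rewrite /lit Eu => A2.
  apply: taut2 A2 (next_not1 (sf j1)) => v; rewrite !pe /=; pfin.
Qed.

Definition cont_i (t : sv) (i : 'I_m) : form PV :=
  if tnth t i then (match sf i with Box a => And a (Box a) | _ => tp end) else tp.
Definition content (t : sv) := bA (map (cont_i t) (enum 'I_m)).

Lemma imp_bigAnd A l : (forall c, List.In c l -> GLC (Imp A c)) -> GLC (Imp A (bA l)).
Proof.
move=> H; apply: (@prop_derive _ (map (Imp A) l)).
  move=> v Hv; rewrite pe_imp pe_bigAnd; apply/implyP => pa; apply: allIn2 => c Hc.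
  by have := allIn Hv (In_map2 (Imp A) Hc); rewrite pe_imp pa.
by move=> h Hh; have [c Hc ->] := In_map Hh; apply: H.
Qed.

Lemma bigAnd_imp l c : List.In c l -> GLC (Imp (bA l) c).
Proof. move=> Hc; apply: taut0 => v; rewrite pe_imp pe_bigAnd; apply/implyP => H; exact: allIn H _ Hc. Qed.

Lemma content_i t i : GLC (Imp (content t) (cont_i t i)).
Proof. apply: bigAnd_imp; apply: In_map2; apply: inIn; by rewrite mem_enum. Qed.

Lemma atom_box_content t : GLC (Imp (atomF t) (Box (content t))).
Proof.
have H : GLC (Imp (atomF t) (bA (map Box (map (cont_i t) (enum 'I_m))))).
  apply: imp_bigAnd => c Hc; have [c' Hc' ->] := In_map Hc; have [i _ ->] := In_map Hc'; rewrite /cont_i.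
  have := atom_lit t i; rewrite /lit; case: (tnth t i) => Hl.
  - case E: (sf i) Hl => [p|a b|a|a|a] Hl; try by apply: taut1 (rule_Nec_box (gtop p0)) => v; rewrite !pe; pfin.
    apply: taut3 Hl (ax_4 a) (box_and a (Box a)) => v; rewrite !pe; pfin.
  - by apply: taut1 (rule_Nec_box (gtop p0)) => v; rewrite !pe; pfin.
apply: taut2 H (box_bigAnd p0 (map (cont_i t) (enum 'I_m))) => v; rewrite !pe; pfin.
Qed.

Definition prec (t u : sv) := forall i a, sf i = Box a -> tnth t i ->
  tnth u i /\ (forall j, sf j = a -> tnth u j).

Lemma cons_prec G t u : Cons G -> GLC (Imp G (content t)) -> GLC (Imp G (atomF u)) -> prec t u.
Proof.
move=> C H1 H2 i a E Ti.
have Hc := content_i t i; rewrite /cont_i Ti E in Hc.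
split.
- apply: (cons_true C H2); rewrite E; apply: taut2 H1 Hc => v; rewrite !pe; pfin.
- move=> j Ej; apply: (cons_true C H2); rewrite Ej; apply: taut2 H1 Hc => v; rewrite !pe; pfin.
Qed.

Lemma prec_trans t u w : prec t u -> prec u w -> prec t w.
Proof. move=> H1 H2 i a E Ti; have [Ui _] := H1 i a E Ti; exact: H2 i a E Ui. Qed.

Definition isBox (a : form PV) := if a is Box _ then true else false.
Definition boxidx := [set i : 'I_m | isBox (sf i)].
Definition bx (t : sv) := [set i : 'I_m | isBox (sf i) && tnth t i].
Definition h (t : sv) := #|boxidx| - #|bx t|.

Lemma bx_sub t : bx t \subset boxidx.
Proof. by apply/subsetP => i; rewrite !inE => /andP[]. Qed.

Lemma prec_bx t u : prec t u -> bx t \subset bx u.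
Proof.
move=> H; apply/subsetP => i; rewrite !inE => /andP[Bi Ti]; rewrite Bi /=.
by move: Bi; case E: (sf i) => [p|a b|a|a|a] //= _; case: (H i a E Ti).
Qed.

Lemma h_le t : h t <= m.
Proof. rewrite /h; apply: leq_trans (leq_subr _ _) _; apply: leq_trans (max_card _) _; by rewrite card_ord. Qed.

Lemma h_lt t u : bx t \proper bx u -> h u < h t.
Proof.
move=> P; have := proper_card P; have := subset_leq_card (bx_sub u); rewrite /h; lia.
Qed.

Definition T := (sv * nat)%type.

Fixpoint Rl (x y : seq T) : Prop :=
  match x, y with
  | (t, k) :: v, (u, k') :: v' =>
      prec t u /\ (bx t \proper bx u \/ (bx t = bx u /\ k' < k)) /\ (v = v' \/ Rl v v')
  | _, _ => False
  end.

Lemma Rl_trans x y z : Rl x y -> Rl y z -> Rl x z.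
Proof.
elim: x y z => [|[t k] v IH] [|[u k1] v1] [|[w k2] v2] //= [P1 [O1 E1]] [P2 [O2 E2]].
split; first exact: prec_trans P1 P2.
split.
- case: O1 => [O1|[O1 L1]]; case: O2 => [O2|[O2 L2]].
  + by left; apply: proper_trans O1 O2.
  + by left; rewrite -O2.
  + by left; rewrite O1.
  + by right; split; [rewrite O1 | apply: ltn_trans L2 L1].
- case: E1 => [E1|R1]; case: E2 => [E2|R2].
  + by left; rewrite E1 E2.
  + by right; rewrite E1.
  + by right; rewrite -E2.
  + right; exact: IH R1 R2.
Qed.

Lemma Rl_irr x : ~ Rl x x.
Proof.
elim: x => [|[t k] v IH] //= [_ [[P|[_ L]] _]]; first by rewrite properxx in P.
by rewrite ltnn in L.
Qed.

Lemma Rl_size x y : Rl x y -> size x = size y.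
Proof.
elim: x y => [|[t k] v IH] [|[u k1] v1] //= [_ [_ [E|R]]]; first by rewrite E.
by rewrite (IH _ R).
Qed.

Fixpoint xi (x : seq T) : form PV :=
  if x is (t, k) :: v then And (atomF t) (Next (xi v)) else tp.

Definition bud (x : seq T) := if x is (_, k) :: _ then k else 0.
Definition budOK (t : sv) (k : nat) (v : seq T) :=
  if v is (_, k2) :: _ then k + h t <= k2 else true.

Fixpoint wfR (x : seq T) : Prop :=
  if x is (t, k) :: v then wfR v /\ Cons (xi x) /\ budOK t k v else True.

Definition D := (ohgt phi).+1.
Definition B := D * m.
Definition inB (x : seq T) := (size x <= D) && all (fun e => e.2 <= B) x.
Definition Good x := wfR x /\ inB x.

Lemma Good_tail t k v : Good ((t, k) :: v) -> Good v.
Proof. by case=> [[W _] /andP[/= S /andP[_ A]]]; split => //; rewrite /inB A andbT; lia. Qed.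

Lemma In_allpairs (A1 A2 R : Type) (f : A1 -> A2 -> R) (s : seq A1) (t : seq A2) (a : A1) (b : A2) :
  List.In a s -> List.In b t -> List.In (f a b) [seq f x y | x <- s, y <- t].
Proof.
elim: s => // x s IH [->|Ha] Hb; rewrite allpairs_cons In_app; first by left; apply: In_map2.
by right; apply: IH.
Qed.

Lemma In_allpairs_inv (A1 A2 R : Type) (f : A1 -> A2 -> R) (s : seq A1) (t : seq A2) (z : R) :
  List.In z [seq f x y | x <- s, y <- t] -> exists (x1 : A1) (y1 : A2), [/\ List.In x1 s, List.In y1 t & z = f x1 y1].
Proof.
elim: s => // x s IH; rewrite allpairs_cons In_app => -[Hm|Hm].
- have [y Hy ->] := In_map Hm; by exists x, y; split => //; left.
- have [x1 [y1 [Hx Hy ->]]] := IH Hm; by exists x1, y1; split => //; right.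
Qed.

Lemma filt (A1 A2 : Type) (g : A1 -> form PV) (f : A2 -> form PV) (P : A2 -> Prop) (C : seq A1) :
  (forall c, List.In c C -> GLC (Not (g c)) \/ exists2 y, P y & GLC (Imp (g c) (f y))) ->
  exists L, (forall y, List.In y L -> P y) /\ GLC (Imp (bO (map g C)) (bO (map f L))).
Proof.
elim: C => [|c C IH] H.
  by exists [::]; split => //; apply: imp_refl.
have [L [HL1 HL2]] : exists L, (forall y, List.In y L -> P y) /\ GLC (Imp (bO (map g C)) (bO (map f L))).
  by apply: IH => c' Hc'; apply: H; right.
case: (H c (or_introl erefl)) => [Hn|[y Py Hy]].
- exists L; split => //=; apply: taut2 Hn HL2 => v; rewrite !pe; pfin.
- exists (y :: L); split; first by move=> z /= [<-|/HL1].
  rewrite /=; apply: taut2 Hy HL2 => v; rewrite !pe; pfin.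
Qed.

Lemma core t k v L : GLC (Imp (xi v) (Box (bO (map xi (v :: L))))) ->
  GLC (Imp (xi ((t, k) :: v)) (Box (And (content t) (Next (bO (map xi (v :: L))))))).
Proof.
move=> H.
have H0 : GLC (Imp (xi v) (bO (map xi (v :: L)))) by apply: taut0 => w; rewrite !pe; pfin.
have H2 := C_rule H0 H.
apply: taut3 (atom_box_content t) H2 (box_and (content t) (Next (bO (map xi (v :: L))))) => w.
rewrite !pe; pfin.
Qed.

Lemma bx_eq t u : prec t u -> ~~ (bx t \proper bx u) -> bx t = bx u.
Proof. by move=> /prec_bx S P; apply/eqP; rewrite eqEproper S. Qed.

Lemma h_eq t u : bx t = bx u -> h t = h u.
Proof. by rewrite /h => ->. Qed.

Definition gC (t : sv) (c : sv * seq T) := And (content t) (And (atomF c.1) (Next (xi c.2))).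

Lemma cand_deriv t v L :
  GLC (Imp (And (content t) (Next (bO (map xi (v :: L)))))
           (bO (map (gC t) [seq (u, w) | u <- allsv, w <- v :: L]))).
Proof.
have H1 := next_bigOr p0 (map xi (v :: L)).
apply: taut2 H1 all_atoms => e; rewrite !pe.
move=> /implyP H /hasIn[a Ha pa]; apply/implyP => /andP[pc pn].
have [nx Hn pnx] := hasIn (H pn).
have [u Hu Eu] := In_map Ha; have [w Hw Ew] := In_map Hn.
have [w' Hw' Ew'] := In_map Hw.
apply: (@hasIn2 _ (peval e) _ (gC t (u, w'))).
  by apply: In_map2; apply: In_allpairs.
rewrite /gC /=; apply/andP; split => //; apply/andP; split; first by rewrite -Eu.
by rewrite Ew Ew' in pnx.
Qed.

Lemma KP x : Good x -> (x = [::] \/ 0 < bud x) ->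
  exists L, (forall y, List.In y L -> Good y /\ Rl x y /\ bud x <= (bud y).+1) /\
    GLC (Imp (xi x) (Box (bO (map xi (x :: L))))).
Proof.
elim: x => [|[t k] v IH] Gx Hb.
  exists [::]; split => //.
  apply: taut1 (rule_Nec_box (@taut0 _ (bO (map xi [:: [::]])) _)) => [e|e]; rewrite !pe; pfin.
have Gv := Good_tail Gx.
have [[Wv [Cx Bx]] IBx] := Gx.
have kpos : 0 < k by case: Hb.
have Hbv : v = [::] \/ 0 < bud v.
  destruct v as [|[u k2] w]; [by left | right; simpl in Bx |- *; lia].
have [Lv [HLv KPv]] := IH Gv Hbv.
pose P y := Good y /\ Rl ((t, k) :: v) y /\ k <= (bud y).+1.
have [L [HL DL]] : exists L, (forall y, List.In y L -> P y) /\
    GLC (Imp (bO (map (gC t) [seq (u, w) | u <- allsv, w <- v :: Lv])) (bO (map xi L))).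
  apply: filt => c Hc.
  have [u [w [Hu Hw Ec]]] := In_allpairs_inv Hc.
  case: (classic (Cons (gC t c))) => Cc; last by left; apply: NNPP.
  right; rewrite Ec in Cc *.
  have Pr : prec t u.
    apply: (cons_prec Cc); apply: taut0 => e; rewrite !pe; pfin.
  have Cy : Cons (xi ((u, 0) :: w)).
    by apply: cons_weak Cc; apply: taut0 => e; rewrite !pe; pfin.
  have Fw : w = v \/ (Good w /\ Rl v w /\ bud v <= (bud w).+1).
    by case: Hw => [<-|/HLv]; [left | right].
  have Gw : Good w by case: Fw => [->//|[]].
  have Sw : size w = size v by case: Fw => [->//|[_ [/Rl_size ->]]].
  pose k' := if bx t \proper bx u then k else k.-1.
  exists ((u, k') :: w); last by apply: taut0 => e; rewrite !pe; pfin.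
  have Hh : (bx t \proper bx u /\ h u < h t) \/ (~~ (bx t \proper bx u) /\ bx t = bx u /\ h u = h t).
    case E: (bx t \proper bx u); first by left; split => //; apply: h_lt.
    right; have Ebx := bx_eq Pr (negbT E); split => //; split => //; by rewrite (h_eq Ebx).
  have Hk' : k' = (if bx t \proper bx u then k else k.-1) by [].
  split; [split; [split; [by case: Gw|split; [exact: Cy|]]|] | split].
  -
    rewrite /budOK; case Ew: w Fw => [|[u2 k2] w2] Fw //.
    have Bv : k + h t <= bud v.
      case: Fw => [Ev|[_ [Rv _]]]; first by move: Bx; rewrite -Ev.
      by move: Bx Rv; case: (v) => [|[u3 k3] v3] //=.
    have Bw : bud v <= k2.+1 \/ bud v = k2.
      by case: Fw => [<-|[_ [_ Hb2]]]; [right | left].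
    rewrite Hk'; case: Hh => [[-> Hl]|[/negbTE -> [_ Hl]]]; move: Bw; rewrite /=; lia.
  -
    rewrite /inB /= Sw; case/andP: IBx => /= S1 /andP[K1 A1].
    rewrite S1 /=; apply/andP; split; first by rewrite Hk'; case: ifP => _; lia.
    by case: Gw => _ /andP[].
  - split => //; split.
      by case: Hh => [[P1 _]|[P2 [E _]]]; [left | right; split => //; rewrite Hk' (negbTE P2); lia].
    by case: Fw => [->|[_ [R _]]]; [left | right].
  - by rewrite Hk'; case: ifP => _ /=; lia.
exists L; split => //.
have E1 : GLC (Imp (And (content t) (Next (bO (map xi (v :: Lv))))) (bO (map xi (((t, k) :: v) :: L)))).
  apply: taut2 (cand_deriv t v Lv) DL => e; rewrite !pe; pfin.
apply: taut2 (@core t k v Lv KPv) (box_mono E1) => e; rewrite !pe; pfin.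
Qed.

Lemma exist_succ t k v i a : Good ((t, k) :: v) -> sf i = Box a -> tnth t i = false ->
  exists u k2 w, [/\ Good ((u, k2) :: w), Rl ((t, k) :: v) ((u, k2) :: w) &
                     forall j, sf j = a -> tnth u j = false].
Proof.
move=> Gx Ei Ti.
have Gv := Good_tail Gx.
have [[Wv [Cx Bx]] IBx] := Gx.
have hpos : 0 < h t.
  have P : bx t \proper boxidx.
    apply/properP; split; first exact: bx_sub.
    by exists i; rewrite !inE Ei //= Ti.
  have := proper_card P; rewrite /h; lia.
have Hbv : v = [::] \/ 0 < bud v.
  destruct v as [|[u k2] w]; [by left | right; simpl in Bx |- *; lia].
have [Lv [HLv KPv]] := KP Gv Hbv.
pose A := And (content t) (Next (bO (map xi (v :: Lv)))).
pose C := And (Box a) (Not a).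
have H1 := @core t k v Lv KPv.
have H2 := lob a.
have H3 := atom_lit t i; rewrite /lit Ti Ei in H3.
have H4 := dia_lemma A C.
have CA : Cons (And C A).
  apply: (cons_dia Cx); apply: taut4 H1 H2 H3 H4 => e; rewrite !pe; pfin.
have D1 : GLC (Imp (And C A) (bO (map (gC t) [seq (u, w) | u <- allsv, w <- v :: Lv]))).
  apply: taut1 (cand_deriv t v Lv) => e; rewrite !pe; pfin.
have [b Hb Cb] := cons_or CA D1.
have [c Hc Ec] := In_map Hb.
have [u [w [Hu Hw Ecw]]] := In_allpairs_inv Hc.
rewrite Ec Ecw in Cb; set G := And (And C A) _ in Cb.
have GA : GLC (Imp G (atomF u)) by apply: taut0 => e; rewrite !pe; pfin.
have Pr : prec t u.
  apply: (cons_prec Cb) GA; apply: taut0 => e; rewrite !pe; pfin.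
have Ui : tnth u i.
  apply: (cons_true Cb GA); rewrite Ei; apply: taut0 => e; rewrite !pe; pfin.
have Prop1 : bx t \proper bx u.
  apply/properP; split; first exact: prec_bx.
  by exists i; rewrite !inE Ei //= Ti.
have Hl := h_lt Prop1.
have Fw : w = v \/ (Good w /\ Rl v w /\ bud v <= (bud w).+1).
  by case: Hw => [<-|/HLv]; [left | right].
have Gw : Good w by case: Fw => [->//|[]].
have Sw : size w = size v by case: Fw => [->//|[_ [/Rl_size ->]]].
exists u, k, w; split.
- split; [split; [by case: Gw|split]|].
  + by apply: cons_weak Cb; apply: taut0 => e; rewrite !pe; pfin.
  + rewrite /budOK; case Ew: w Fw => [|[u2 k2] w2] Fw //.
    have Bv : k + h t <= bud v.
      case: Fw => [Ev|[_ [Rv _]]]; first by move: Bx; rewrite -Ev.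
      by move: Bx Rv; case: (v) => [|[u3 k3] v3] //=.
    have Bw : bud v <= k2.+1 \/ bud v = k2.
      by case: Fw => [<-|[_ [_ Hb2]]]; [right | left].
    move: Bw; rewrite /=; lia.
  + rewrite /inB /= Sw; case/andP: IBx => /= S1 /andP[K1 A1].
    rewrite S1 K1 /=; by case: Gw => _ /andP[].
- split => //; split; first by left.
  by case: Fw => [->|[_ [R _]]]; [left | right].
- move=> j Ej; apply: (cons_false Cb GA); rewrite Ej; apply: taut0 => e; rewrite !pe; pfin.
Qed.

Fixpoint lists_upto (E : seq T) n : seq (seq T) :=
  if n is n'.+1 then [::] :: [seq e :: l | e <- E, l <- lists_upto E n'] else [:: [::]].

Definition Ent : seq T := [seq (t, n) | t <- allsv, n <- iota 0 B.+1].

Lemma memE e : (e \in Ent) = (e.2 <= B).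
Proof.
apply/allpairsP/idP => [[[t n] [_ Hn ->]]|He].
  by move: Hn; rewrite mem_iota /= add0n ltnS.
exists (e.1, e.2); split; first by rewrite mem_enum.
  by rewrite mem_iota /= add0n ltnS.
by case: e He.
Qed.

Lemma mem_upto l n : (l \in lists_upto Ent n) = (size l <= n) && all (mem Ent) l.
Proof.
elim: n l => [|n IH] [|e l] //=.
rewrite inE /=; apply/allpairsP/idP => [[[e1 l1] [/= H1 H2 [-> ->]]]|/andP[Hs /andP[He Hl]]].
  by move: H2; rewrite IH => /andP[Hs Ha]; rewrite /= ltnS Hs H1 Ha.
by exists (e, l); split => //=; rewrite IH -ltnS Hs Hl.
Qed.

Definition allpts := lists_upto Ent D.

Lemma inB_in x : inB x -> x \in allpts.
Proof.
case/andP => Hs Ha; rewrite mem_upto Hs /=; apply/allP => e He.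
change (e \in Ent); rewrite memE; exact: (allP Ha) e He.
Qed.
Lemma in_inB x : x \in allpts -> inB x.
Proof.
rewrite mem_upto => /andP[Hs Ha]; rewrite /inB Hs /=; apply/allP => e He.
have H : e \in Ent := (allP Ha) e He; by rewrite memE in H.
Qed.

Definition Wt := seq_sub allpts.

Lemma behead_in (p : Wt) : behead (ssval p) \in allpts.
Proof.
apply: inB_in; have := in_inB (ssvalP p); case: (ssval p) => [|e l] //=.
by rewrite /inB /= => /andP[Hs /andP[_ ->]]; rewrite andbT; lia.
Qed.

Lemma nil_in : ([::] : seq T) \in allpts.
Proof. by apply: inB_in. Qed.

Definition Rw (p q : Wt) : Prop := Rl (ssval p) (ssval q) /\ wfR (ssval q).
Definition fw (p : Wt) : Wt := SeqSub (behead_in p).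
Definition nilpt : Wt := SeqSub nil_in.

Lemma fw_mono p q : Rw p q -> fw p = fw q \/ Rw (fw p) (fw q).
Proof.
rewrite /Rw /fw; case: p q => [x Hx] [y Hy] /=.
destruct x as [|[t k] v]; destruct y as [|[u k'] w]; rewrite /= => -[Hr Hw] //.
case: Hr => _ [_ [E|R]]; first by left; apply: val_inj => /=; rewrite E.
by right; split => //; case: Hw.
Qed.

Definition Fr : finDynFrame :=
  {| dW := Wt; dpt := nilpt; dR := Rw; df := fw; df_weak_mono := fw_mono |}.

Lemma Fr_GL : is_dynGL Fr.
Proof.
split => [x y z [R1 _] [R2 W2]|x [R _]]; first by split => //; apply: Rl_trans R1 R2.
exact: Rl_irr R.
Qed.

Definition Vl (p : PV) (w : Wt) : Prop :=
  exists t k v j, [/\ ssval w = (t, k) :: v, sf j = Var p & tnth t j].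

Lemma wf_AC t k v : wfR ((t, k) :: v) -> AC t.
Proof. case=> _ [C _]; apply: cons_weak C; apply: taut0 => e; rewrite !pe; pfin. Qed.

Lemma TL a : forall (w : Wt) t k v j, wfR (ssval w) -> ssval w = (t, k) :: v -> sf j = a ->
  ohgt a < size (ssval w) -> (@sat PV Fr Vl w a <-> tnth t j).
Proof.
elim: a => [p|a IHa b IHb|a IHa|a IHa|a IHa] w t k v j Ww Ew Ej Ho.
- rewrite /=; split => [[t' [k' [v' [j' [E' Ej' T']]]]]|Tj].
    move: E'; rewrite Ew => -[Et _ _].
    have AC1 : AC t by apply: (@wf_AC t k v); rewrite -Ew.
    by rewrite (ac_eq AC1 (i := j) (j := j')) ?Et // Ej Ej'.
  by exists t, k, v, j.
- have [[j1 E1] [j2 E2]] := sf_and Ej.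
  have AC1 : AC t by apply: (@wf_AC t k v); rewrite -Ew.
  rewrite (ac_and AC1 (j := j1) (k := j2)) ?Ej ?E1 ?E2 //=.
  move: Ho => /= Ho.
  have Ha := leq_ltn_trans (leq_maxl _ _) Ho; have Hb := leq_ltn_trans (leq_maxr _ _) Ho.
  rewrite (IHa w t k v j1) // (IHb w t k v j2) //.
  by split => [[-> ->]|/andP].
- have [j1 E1] := sf_not Ej.
  have AC1 : AC t by apply: (@wf_AC t k v); rewrite -Ew.
  rewrite (ac_not AC1 (j := j1)) ?Ej ?E1 //=.
  have IH := IHa w t k v j1 Ww Ew E1 Ho.
  split => /= [Hn|Hn].
    by apply/negP => T1; apply: Hn; apply/IH.
  by move=> /IH T1; rewrite T1 in Hn.
- have [j1 E1] := sf_box Ej.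
  have Gw : Good (ssval w) by split => //; apply: in_inB (ssvalP w).
  split => [Hs|Tj].
    case Tj: (tnth t j) => //; exfalso.
    rewrite Ew in Gw; have [u [k2 [w2 [Gy Ry Fy]]]] := exist_succ Gw Ej Tj.
    pose wy : Wt := SeqSub (inB_in (proj2 Gy)).
    have Rwy : Rw w wy by split; [rewrite Ew | exact: proj1 Gy].
    have Hsz : ohgt a < size (ssval wy).
      by have := Rl_size Ry; rewrite /= => [[<-]]; move: Ho; rewrite Ew.
    have H := Hs wy Rwy.
    have := proj1 (IHa wy u k2 w2 j1 (proj1 Gy) erefl E1 Hsz) H.
    by rewrite Fy.
  move=> u [Ru Wu].
  have Hsz : size (ssval w) = size (ssval u) by rewrite (Rl_size Ru).
  move: Ru; rewrite Ew; case Eu: (ssval u) => [|[t2 k2] v2] //= [Pr _].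
  apply: (proj2 (IHa u t2 k2 v2 j1 Wu Eu E1 _)).
    by rewrite -Hsz.
  by case: (Pr j a Ej Tj) => _; apply.
- have [j1 E1] := sf_next Ej.
  move: Ho; rewrite Ew /= ltnS => Ho.
  destruct v as [|[t2 k2] v2]; first by rewrite ltn0 in Ho.
  have Wv : wfR ((t2, k2) :: v2) by move: Ww; rewrite Ew => -[].
  have Efw : ssval (fw w) = (t2, k2) :: v2 by rewrite /fw /= Ew.
  have IH := IHa (fw w) t2 k2 v2 j1 (eq_ind_r _ Wv Efw) Efw E1 (eq_ind_r (fun s => ohgt a < size s) Ho Efw).
  rewrite /=; apply: (iff_trans IH).
  have := Ww; rewrite Ew => -[_ [C _]].
  have Ec : sf j = Next (sf j1) by rewrite Ej E1.
  by rewrite (compat Ec C).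
Qed.

Fixpoint cov n c : seq (seq T) :=
  if n is n'.+1 then [seq (t, c) :: l | t <- allsv, l <- cov n' (c + m)] else [:: [::]].

Lemma cov_all n c : GLC (bO (map xi (cov n c))).
Proof.
elim: n c => [|n IH] c.
  by apply: taut0 => e; rewrite !pe; pfin.
have H1 := rule_MP (next_bigOr p0 (map xi (cov n (c + m)))) (rule_Nec_next (IH (c + m))).
apply: taut2 H1 all_atoms => e; rewrite !pe_bigOr => /hasIn[nx Hn pnx] /hasIn[a Ha pa].
have [u Hu Eu] := In_map Ha; have [w Hw Ew] := In_map Hn.
have [w' Hw' Ew'] := In_map Hw.
apply: (@hasIn2 _ (peval e) _ (xi ((u, c) :: w'))).
  by apply: In_map2; apply: (@In_allpairs _ _ _ (fun t l => (t, c) :: l)).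
rewrite /=; apply/andP; split; first by rewrite -Eu.
by rewrite Ew Ew' in pnx.
Qed.

Fixpoint okb (l : seq T) := if l is (t, k) :: v then budOK t k v && okb v else true.

Lemma cov_prop n c l : List.In l (cov n c) ->
  [/\ size l = n, okb l, (0 < n -> bud l = c) & all (fun e => e.2 <= c + n * m) l].
Proof.
elim: n c l => [|n IH] c l /=; first by case=> // <-.
move=> Hin; have [t [l' [_ Hl' ->]]] := In_allpairs_inv Hin.
have [S1 O1 B1 A1] := IH _ _ Hl'.
split => //=; first by rewrite S1.
- rewrite O1 andbT; case: l' Hl' S1 O1 B1 A1 => [|[u k2] w] //= _ S1 _ B1 _.
  rewrite B1 ?S1 //; have := h_le t; lia.
- apply/andP; split; first by lia.
  apply/allP => e He; have := (allP A1) e He; rewrite mulSn /=; lia.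
Qed.

Lemma wf_of_cons l : okb l -> Cons (xi l) -> wfR l.
Proof.
elim: l => [|[t k] v IH] //= /andP[B O] C; split; last by split.
apply: IH O _; apply: cons_next; apply: cons_weak C; apply: taut0 => e; rewrite !pe; pfin.
Qed.

Lemma completeness : (forall F, is_dynGL F -> valid_on F phi) -> GLC phi.
Proof.
move=> Hv; apply: NNPP => Hn.
have Cn : Cons (Not phi).
  by move=> H; apply: Hn; apply: taut1 H => e; pfin.
have H1 : GLC (Imp (Not phi) (bO (map xi (cov D 0)))).
  by apply: taut1 (cov_all D 0) => e; rewrite !pe; pfin.
have [b Hb Cb] := cons_or Cn H1.
have [l Hl El] := In_map Hb; rewrite El in Cb.
have [S1 O1 B1 A1] := cov_prop Hl.
have Wl : wfR l.
  by apply: wf_of_cons O1 _; apply: cons_weak Cb; apply: taut0 => e; rewrite !pe; pfin.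
have Il : inB l by rewrite /inB S1 leqnn /= /B; rewrite add0n in A1.
destruct l as [|[t k] v]; first by [].
have m0 : 0 < m by rewrite /m /S; case: (phi).
pose j0 : 'I_m := Ordinal m0.
have Ej0 : sf j0 = phi by rewrite /sf /S; case: (phi).
have Tj : tnth t j0 = false.
  apply: (cons_false Cb); first by apply: taut0 => e; rewrite !pe; pfin.
  rewrite Ej0; apply: taut0 => e; rewrite !pe; pfin.
pose w : Wt := SeqSub (inB_in Il).
have Ho : ohgt phi < size (ssval w) by change (ohgt phi < size ((t, k) :: v)); rewrite S1.
have := proj1 (TL (w := w) Wl erefl Ej0 Ho) (Hv Fr Fr_GL Vl w).
by rewrite Tj.
Qed.

End Comp.

Theorem mainTheorem6 (PV : Type) (p0 : PV) (phi : form PV) :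
  GLC phi <-> (forall F : finDynFrame, is_dynGL F -> valid_on F phi).
Proof.
split; first by move=> H; apply: soundness.
exact: (@completeness PV p0 phi).
Qed.
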